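(* For every horizon $T\ge 1$ and every number of actions $A\ge 2$ there exists a deterministic MDP with $A$ actions and horizon $T$ such that, with $Q^1=Q^{\pi^{\mathrm{rand}}}$ and $Q^{i+1}=\mathrm{QVI}(Q^i)$, for every $i\in\{1,\dots,T-1\}$ no policy in $\Pi(Q^i)$ is optimal.
   Context: Deterministic finite-horizon MDP $\mathcal M=(\mathcal S,\mathcal A,T,s_1,f,R)$ as usual: finite states and actions ($A=|\mathcal A|$), fixed start state $s_1$, transitions $s_{t+1}=f(s_t,a_t)$, rewards $R(s_t,a_t)$, steps $t\in[T]=\{1,\dots,T\}$, no discounting. A policy $\pi=(\pi_1,\dots,\pi_T)$ has $\pi_t:\mathcal S\to\Delta(\mathcal A)$; for deterministic $\pi_t$ write $\pi_t(s)$ for its action. $Q^\pi_t(s,a)=\mathbb E_\pi[\sum_{t'=t}^T R(s_{t'},a_{t'})\mid s_t=s,a_t=a]$. $J(\pi)=\mathbb E_\pi[\sum_{t=1}^TR(s_t,a_t)]$, and $\pi$ is optimal if $J(\pi)=\max_{\pi'}J(\pi')$. The uniformly random policy is $\pi^{\mathrm{rand}}_t(a\mid s)=1/A$. For a time-indexed function $Q=(Q_t)_{t\in[T]}$, $Q_t:\mathcal S\times\mathcal A\to\mathbb R$, Q-value iteration gives $Q'=\mathrm{QVI}(Q)$ with $Q'_t(s,a)=R(s,a)+\max_{a'\in\mathcal A}Q_{t+1}(f(s,a),a')$ for $t<T$ and $Q'_T(s,a)=R(s,a)$. $\Pi(Q)$ denotes the set of deterministic policies $\pi$ with $\pi_t(s)\in\arg\max_{a\in\mathcal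 A}Q_t(s,a)$ for all $s\in\mathcal S$, $t\in[T]$. *)

(* Defs.v *)
From HB Require Import structures.
From mathcomp Require Import all_boot all_order all_algebra.
From mathcomp Require Import reals.
Set Implicit Arguments. Unset Strict Implicit. Unset Printing Implicit Defensive.
Import Order.TTheory GRing.Theory Num.Theory.
Local Open Scope ring_scope.

Record mdp (R : realType) (A : nat) := MDP {
  state : finType;
  start : state;
  trans : state -> 'I_A -> state;
  rew   : state -> 'I_A -> R }.

Section MDPdefs.
Variables (R : realType) (A : nat) (M : mdp R A) (T : nat).
Local Notation S := (state M).
Local Notation f := (@trans _ _ M).
Local Notation r := (@rew _ _ M).

(* time-indexed Q-functions Q t s a, with t ranging over 1..T *)
Definition qfun := nat -> S -> 'I_A -> R.

(* stochastic (Markov, time-dependent) policies: pi t s a = pi_t(a | s) *)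
Definition spolicy := nat -> S -> 'I_A -> R.
Definition is_policy (pi : spolicy) : Prop :=
  forall t, (1 <= t <= T)%N -> forall s,
    (forall a, 0 <= pi t s a) /\ \sum_a pi t s a = 1.

Definition dpolicy := nat -> S -> 'I_A.
Definition det_to_stoch (pi : dpolicy) : spolicy :=
  fun t s a => if a == pi t s then 1 else 0.

Definition pi_rand : spolicy := fun _ _ _ => (A%:R)^-1.

(* Q^pi, computed by backward recursion over the number k of remaining steps
   after the current one: Qaux k = Q^pi_{T-k}. *)
Fixpoint Qaux (pi : spolicy) (k : nat) (s : S) (a : 'I_A) : R :=
  match k with
  | 0 => r s a
  | k'.+1 => r s a + \sum_b pi (T - k')%N (f s a) b * Qaux pi k' (f s a) b
  end.
Definition Qpi (pi : spolicy) : qfun := fun t s a => Qaux pi (T - t) s a.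

Definition J (pi : spolicy) : R := \sum_a pi 1%N (@start _ _ M) a * Qpi pi 1%N (@start _ _ M) a.

Definition optimal (pi : spolicy) : Prop :=
  forall pi' : spolicy, is_policy pi' -> J pi' <= J pi.

Definition fmax (X : finType) (F : X -> R) : R :=
  match [pick x : X] with
  | Some x0 => \big[Num.max/F x0]_(x : X) F x
  | None => 0
  end.

Definition QVI (Q : qfun) : qfun := fun t s a =>
  if (t < T)%N then r s a + fmax (fun b => Q t.+1 (f s a) b) else r s a.

Definition Qiter (i : nat) : qfun := iter i.-1 QVI (Qpi pi_rand).

Definition greedy (Q : qfun) (pi : dpolicy) : Prop :=
  forall t, (1 <= t <= T)%N -> forall s b, Q t s b <= Q t s (pi t s).

End MDPdefs.

Arguments greedy {R A} M T Q pi.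
Arguments Qiter {R A} M T i _ _ _.
Arguments optimal {R A} M T pi.
Arguments det_to_stoch {R A M} pi _ _ _.
Arguments Qpi {R A} M T pi _ _ _.
Arguments J {R A} M T pi.
Arguments QVI {R A} M T Q _ _ _.
Arguments is_policy {R A} M T pi.

(* Main.v *)
Require Import Defs.
From HB Require Import structures.
From mathcomp Require Import all_boot all_order all_algebra.
From mathcomp Require Import reals.
From mathcomp Require Import lra zify.
Import Order.TTheory GRing.Theory Num.Theory.
Local Open Scope ring_scope.

Lemma fmax_ub (R : realType) (X : finType) (F : X -> R) (M : R) (b : X) :
  (forall x, F x <= M) -> fmax F <= M.
Proof.
move=> H; rewrite /fmax; case: pickP => [x0 _|H']; last by have := H' b.
by apply: (big_ind (fun y => y <= M)) => // y z Hy Hz; rewrite ge_max Hy Hz.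
Qed.

Lemma fmax_lb (R : realType) (X : finType) (F : X -> R) (b : X) :
  F b <= fmax F.
Proof.
rewrite /fmax; case: pickP => [x0 _|H]; last by have := H b.
rewrite unlock /reducebig.
have : b \in index_enum X by rewrite mem_index_enum.
elim: (index_enum X) => //= y s IH; rewrite inE => /orP[/eqP->|/IH H].
  by rewrite le_max lexx.
by rewrite le_max H orbT.
Qed.

Lemma fmax0 (R : realType) (X : finType) (F : X -> R) (b : X) :
  (forall x, F x = 0) -> fmax F = 0.
Proof.
move=> H; apply/eqP; rewrite eq_le (@fmax_ub _ _ _ _ b) ?(H b) //=.
  by rewrite -(H b) (@fmax_lb _ _ _ b).
by move=> x; rewrite H.
Qed.

Lemma sum_pick (R : realType) (A : nat) (x : 'I_A) (F : 'I_A -> R) (c : R) :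
  (forall a, a != x -> F a = 0) -> \sum_a c * F a = c * F x.
Proof.
move=> H; rewrite (bigD1 x) //= big1 ?addr0 // => a /H ->; by rewrite mulr0.
Qed.

Definition s3 : 'I_3 := @Ordinal 3 0 isT.
Definition g3 : 'I_3 := @Ordinal 3 1 isT.
Definition z3 : 'I_3 := @Ordinal 3 2 isT.
Definition a0 (n : nat) : 'I_n.+2 := @Ordinal n.+2 0 isT.
Definition a1 (n : nat) : 'I_n.+2 := @Ordinal n.+2 1 isT.

Definition tr3 (n : nat) (s : 'I_3) (a : 'I_n.+2) : 'I_3 :=
  if (val s <= 1)%N then (if val a == 1%N then g3 else z3) else z3.
Definition rw3 (R : realType) (T n : nat) (s : 'I_3) (a : 'I_n.+2) : R :=
  if val s == 0%N then (if val a == 0%N then T%:R - 1 - 4^-1 else 0)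
  else if val s == 1%N then (if val a == 1%N then 1 else 0) else 0.

Definition M3 (R : realType) (T n : nat) : mdp R n.+2 :=
  @MDP R n.+2 (ordinal 3) s3 (@tr3 n) (@rw3 R T n).
Lemma QauxZ (R : realType) T n (pi : spolicy (M3 R T n)) k a :
  Qaux T pi k (z3 : state (M3 R T n)) a = 0.
Proof.
elim: k a => [|k IH] a /=; first by rewrite /rw3.
rewrite /rw3 /= add0r big1 // => b _; by rewrite /tr3 /= IH mulr0.
Qed.

Lemma Qauxg0 (R : realType) T n (pi : spolicy (M3 R T n)) k a :
  a != a1 n -> Qaux T pi k (g3 : state (M3 R T n)) a = 0.
Proof.
move=> Ha; have Ha' : (val a == 1%N) = false.
  by apply/negbTE; apply: contra Ha => /eqP E; apply/eqP/val_inj.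
case: k => [|k] /=; first by rewrite /rw3 /= Ha'.
rewrite /rw3 /= Ha' add0r big1 // => b _; by rewrite /tr3 /= Ha' QauxZ mulr0.
Qed.

Lemma Qrand_g (R : realType) T n k :
  let Q := Qaux T (@pi_rand R n.+2 (M3 R T n)) k (g3 : state (M3 R T n)) (a1 n) in
  0 <= Q <= k%:R + 1 /\ ((0 < k)%N -> Q <= k%:R + 2^-1).
Proof.
elim: k => [|k IH] /=; first by rewrite /rw3 /=; split => //; rewrite add0r lexx ler01.
move: IH => /= [/andP[H0 H1] _].
rewrite (@sum_pick _ _ (a1 n)); last by move=> b Hb; rewrite /tr3 /= Qauxg0.
rewrite /tr3 /rw3 /=.
set q := Qaux _ _ _ _ _ in H0 H1 *.
have hA : 0 <= (n.+2%:R : R)^-1 <= 2^-1.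
  rewrite invr_ge0 ler0n /= lef_pV2 ?posrE ?ltr0n // ler_nat //.
have hq : (n.+2%:R : R)^-1 * q <= 2^-1 * q by rewrite ler_wpM2r //; case/andP: hA.
have hq0 : 0 <= (n.+2%:R : R)^-1 * q by rewrite mulr_ge0 //; case/andP: hA.
rewrite -[k.+1%:R]natr1.
clearbody q; move: hq hq0; set u := (_ * q); move=> hq hq0; clearbody u; clear hA; have hk : 0 <= (k%:R : R) by []. split; [apply/andP; split|]; try lra.
Qed.
Lemma Qit (R : realType) T n j :
  let Q := Qiter (M3 R T n) T j.+1 in
  (forall t a, Q t (z3 : state (M3 R T n)) a = 0) /\
  (forall t a, a != a1 n -> Q t (g3 : state (M3 R T n)) a = 0) /\
  (forall t, 0 <= Q t (g3 : state (M3 R T n)) (a1 n) <= (T - t)%:R + 1) /\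
  (forall t, (t + j.+1 <= T)%N -> Q t (g3 : state (M3 R T n)) (a1 n) <= (T - t)%:R + 2^-1).
Proof.
elim: j => [|j IH] /=.
  rewrite /Qiter /= /Qpi; split; first by move=> t a; rewrite QauxZ.
  split; first by move=> t a Ha; rewrite Qauxg0.
  split; first by move=> t; case: (Qrand_g R T n (T - t)).
  move=> t Ht; case: (Qrand_g R T n (T - t)) => _ -> //; lia.
move: IH => [HZ [Hg [Hb Hs]]].
have E : Qiter (M3 R T n) T j.+2 = QVI (M3 R T n) T (Qiter (M3 R T n) T j.+1) by [].
rewrite E /QVI.
have HZ' : forall t, fmax (fun b => Qiter (M3 R T n) T j.+1 t (z3 : state (M3 R T n)) b) = 0.
  by move=> t; apply: (@fmax0 _ _ _ (a1 n)) => b; rewrite HZ.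
split.
  by move=> t a; case: ifP => _; rewrite /= /rw3 /tr3 /= ?HZ' ?addr0.
split.
  move=> t a Ha; have Ha' : (val a == 1%N) = false.
    by apply/negbTE; apply: contra Ha => /eqP E'; apply/eqP/val_inj.
  by case: ifP => _; rewrite /= /rw3 /tr3 /= Ha' ?HZ' ?addr0.
have hub : forall t (U : R), Qiter (M3 R T n) T j.+1 t.+1 (g3 : state (M3 R T n)) (a1 n) <= U ->
   0 <= U ->
   fmax (fun b => Qiter (M3 R T n) T j.+1 t.+1 (g3 : state (M3 R T n)) b) <= U.
  move=> t U H1 H0; apply: (@fmax_ub _ _ _ _ (a1 n)) => b.
  by case: (eqVneq b (a1 n)) => [->|/Hg ->].
have hlb : forall t, 0 <= fmax (fun b => Qiter (M3 R T n) T j.+1 t.+1 (g3 : state (M3 R T n)) b).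
  move=> t; apply: le_trans (@fmax_lb _ _ _ (a1 n)); by case/andP: (Hb t.+1).
split.
  move=> t; case: ifP => Ht; rewrite /= /rw3 /tr3 /=.
    have := hlb t; case/andP: (Hb t.+1) => h0 h1.
    have hT : (T - t)%:R = (T - t.+1)%:R + 1 :> R by rewrite natr1; congr (_%:R); lia.
    have := hub t _ h1 (le_trans h0 h1) => h2 h3.
    rewrite hT; apply/andP; split; lra.
  have -> : (T - t = 0)%N by lia.
  by rewrite add0r lexx ler01.
move=> t Ht; have Ht' : (t < T)%N by lia.
rewrite Ht' /= /rw3 /tr3 /=.
have h1 := Hs t.+1 ltac:(lia).
have hT : (T - t)%:R = (T - t.+1)%:R + 1 :> R by rewrite natr1; congr (_%:R); lia.
have h0 : 0 <= (T - t.+1)%:R + 2^-1 :> R by rewrite addr_ge0 // invr_ge0 ler0n.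
have := hub t _ h1 h0; rewrite hT => h2; lra.
Qed.
Lemma sum_ind (R : realType) (A : nat) (x : 'I_A) (F : 'I_A -> R) :
  \sum_a (if a == x then 1 else 0) * F a = F x.
Proof.
rewrite (bigD1 x) //= eqxx mul1r big1 ?addr0 // => a /negbTE ->; by rewrite mul0r.
Qed.

Lemma Qaux_good (R : realType) T n k :
  Qaux T (det_to_stoch (fun _ _ => a1 n) : spolicy (M3 R T n)) k
    (g3 : state (M3 R T n)) (a1 n) = k%:R + 1.
Proof.
elim: k => [|k IH] /=; first by rewrite /rw3 /= add0r.
rewrite /det_to_stoch sum_ind /tr3 /= IH /rw3 /= -natr1; lra.
Qed.

Theorem mainTheorem2 (R : realType) (T A : nat) :
  (1 <= T)%N -> (2 <= A)%N ->
  exists M : mdp R A,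
    forall i : nat, (1 <= i <= T - 1)%N ->
      forall pi : dpolicy M,
        greedy M T (Qiter M T i) pi -> ~ optimal M T (det_to_stoch pi).
Proof.
move=> HT; case: A => [|[|n]] // _.
exists (M3 R T n) => i /andP[Hi1 HiT] pi Hgr Hopt.
have [m Tm] : exists m, T = m.+2 by exists (T - 2)%N; lia.
subst T.
set c : R := (m.+2)%:R - 1 - 4^-1.
have Hc : c = m%:R + 1 - 4^-1.
  rewrite /c -[m.+2%:R]natr1 -[m.+1%:R]natr1; lra.
have Hs0 : Qiter (M3 R m.+2 n) m.+2 i 1 (s3 : state (M3 R m.+2 n)) (a0 n) = c /\
  forall b, b != a0 n -> Qiter (M3 R m.+2 n) m.+2 i 1 (s3 : state (M3 R m.+2 n)) b < c.
  clear Hgr Hopt; case: i Hi1 HiT => [|[|j]] // _ HiT.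
    rewrite /Qiter /= /Qpi.
    have -> : (m.+2 - 1 = m.+1)%N by lia.
    split.
      by rewrite /= /rw3 /tr3 /= big1 ?addr0 // => b _; rewrite QauxZ mulr0.
    move=> b Hb /=.
    have Hb' : (val b == 0%N) = false.
      by apply/negbTE; apply: contra Hb => /eqP E'; apply/eqP/val_inj.
    rewrite /rw3 /= Hb' add0r.
    case: (eqVneq b (a1 n)) => [->|Hb1].
      rewrite (@sum_pick _ _ (a1 n)); last by move=> d Hd; rewrite /tr3 /= Qauxg0.
      rewrite /tr3 /=.
      case: (Qrand_g R m.+2 n m) => /andP[h0 h1] _.
      set q := Qaux _ _ _ _ _ in h0 h1 *.
      have hA : (n.+2%:R : R)^-1 <= 2^-1 by rewrite lef_pV2 ?posrE ?ltr0n // ler_nat.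
      have hq : (n.+2%:R : R)^-1 * q <= 2^-1 * q by rewrite ler_wpM2r.
      move: hq; clearbody q; set u := (_ * q) => hq; clearbody u.
      have hm : 0 <= (m%:R : R) by [].
      rewrite Hc; lra.
    have Hb1' : (val b == 1%N) = false.
      by apply/negbTE; apply: contra Hb1 => /eqP E'; apply/eqP/val_inj.
    rewrite /tr3 /= Hb1' big1 ?Hc; last by move=> d _; rewrite QauxZ mulr0.
    have hm : 0 <= (m%:R : R) by [].
    lra.
  have E : Qiter (M3 R m.+2 n) m.+2 j.+2 = QVI (M3 R m.+2 n) m.+2 (Qiter (M3 R m.+2 n) m.+2 j.+1) by [].
  rewrite E /QVI /=.
  case: (Qit R m.+2 n j) => HZ [Hg [_ Hs]].
  have HZ' : fmax (fun b => Qiter (M3 R m.+2 n) m.+2 j.+1 2 (z3 : state (M3 R m.+2 n)) b) = 0.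
    by apply: (@fmax0 _ _ _ (a1 n)) => b; rewrite HZ.
  split; first by rewrite /rw3 /tr3 /= HZ' addr0.
  move=> b Hb.
  have Hb' : (val b == 0%N) = false.
    by apply/negbTE; apply: contra Hb => /eqP E'; apply/eqP/val_inj.
  rewrite /rw3 /= Hb' add0r.
  have hm : 0 <= (m%:R : R) by [].
  case: (eqVneq b (a1 n)) => [->|Hb1].
    rewrite /tr3 /=.
    have h1 := Hs 2 ltac:(lia).
    have h0 : 0 <= (m.+2 - 2)%:R + 2^-1 :> R by rewrite addr_ge0 // invr_ge0 ler0n.
    have : fmax (fun b => Qiter (M3 R m.+2 n) m.+2 j.+1 2 (g3 : state (M3 R m.+2 n)) b)
       <= (m.+2 - 2)%:R + 2^-1.
      apply: (@fmax_ub _ _ _ _ (a1 n)) => d.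
      by case: (eqVneq d (a1 n)) => [->|/Hg ->].
    have -> : (m.+2 - 2 = m)%N by lia.
    rewrite Hc => h; lra.
  have Hb1' : (val b == 1%N) = false.
    by apply/negbTE; apply: contra Hb1 => /eqP E'; apply/eqP/val_inj.
  rewrite /tr3 /= Hb1' HZ' Hc; lra.
case: Hs0 => Hs0 Hlt.
have Hpi : pi 1%N s3 = a0 n.
  apply/eqP; apply/negPn/negP => Hne.
  have := Hgr 1%N ltac:(lia) s3 (a0 n); rewrite Hs0 => h.
  have := Hlt _ Hne => h'; lra.
set pi' := det_to_stoch (fun _ _ => a1 n) : spolicy (M3 R m.+2 n).
have Hpol : is_policy (M3 R m.+2 n) m.+2 pi'.
  move=> t _ s; split; first by move=> a; rewrite /pi' /det_to_stoch; case: ifP.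
  rewrite /pi' /det_to_stoch -[RHS](@sum_ind R _ (a1 n) (fun _ => 1)).
  by apply: eq_bigr => a _; rewrite mulr1.
have := Hopt pi' Hpol.
rewrite /J /Qpi /pi' /det_to_stoch !sum_ind Hpi.
have -> : (m.+2 - 1 = m.+1)%N by lia.
rewrite /= /rw3 /tr3 /= add0r !sum_ind QauxZ addr0.
rewrite (Qaux_good R m.+2 n m) -/c Hc; lra.
Qed.
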